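(* Let $\mathcal{E}_{\mathrm{MUB}}$ be the minimal Clifford measurement ensemble described in the context, let $V$ be any $n$-qubit Clifford unitary, $O=V^{\dagger}|\mathbf{0}\rangle\langle\mathbf{0}|V$, and for $U\in\mathcal{E}_{\mathrm{MUB}}$, $\mathbf{b}\in\{0,1\}^n$ let $\alpha_{U,\mathbf{b}}=\operatorname{tr}(O\,U^{\dagger}|\mathbf{b}\rangle\langle\mathbf{b}|U)=|\langle\mathbf{b}|UV^{\dagger}|\mathbf{0}\rangle|^2$. Then $$\sum_{U\in\mathcal{E}_{\mathrm{MUB}}}\max_{\mathbf{b}}\alpha_{U,\mathbf{b}}=2.$$ Moreover, for each $U\in\mathcal{E}_{\mathrm{MUB}}$, if the Z-Tableau of $UV^{\dagger}$ is $[C,D]$ and $r_U=\mathrm{rank}_{\mathbb{F}_2}(C)$, then exactly $2^{r_U}$ of the values $\alpha_{U,\mathbf{b}}$, $\mathbf{b}\in\{0,1\}^n$, equal $2^{-r_U}$ and the remaining $2^n-2^{r_U}$ equal $0$.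
   Context: Galois arithmetic: fix an irreducible polynomial $P_n(x)$ of degree $n$ over $\mathrm{GF}(2)$; integers $a=\sum_i a_i2^i\in\{0,\dots,2^n-1\}$ are identified with polynomials $\sum_ia_ix^i$ and row vectors $(a_0,\dots,a_{n-1})$, and $a\odot b=a(x)b(x)\bmod P_n(x)$. Let $\Gamma_{k,j}$ be the coefficient of $x^j$ in $x^k\bmod P_n$, and $M_n^{(0)}$ the $n\times n$ binary matrix with entries $\Gamma_{p+q,0}$. For $v\in\{0,\dots,2^n-1\}$ let $\alpha_{v,i,j}$ be the $j$-th entry of $(v\odot 2^i)M_n^{(0)}$ mod 2 and $g_i^{(v)}=\sqrt{-1}^{\,\alpha_{v,i,i}}X_i\prod_jZ_j^{\alpha_{v,i,j}}$ ($X_i,Z_i$ Paulis on qubit $i$). $\mathcal{E}_{\mathrm{MUB}}=\{\mathbb{I}\}\cup\{U_v\}_{v=0}^{2^n-1}$, where $U_v$ is a Clifford unitary with $U_v^{\dagger}Z_iU_v=\pm g_i^{(v)}$ for all $i$. Z-Tableau: for a Clifford unitary $W$, write $W^{\dagger}Z_iW=\pm\prod_{j=0}^{n-1}X_j^{\gamma_{ij}}Z_j^{\delta_{ij}}$ (up to phase) with $\gamma_{ij},\delta_{ij}\in\{0,1\}$; the Z-Tableau of $W$ is the pair $[C,D]$ of $n\times n$ binary matrices $C=[\gamma_{ij}]$, $D=[\delta_{ij}]$. *)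

(* Defs.v *)
From HB Require Import structures.
From mathcomp Require Import all_boot all_order all_algebra all_field.
Set Implicit Arguments. Unset Strict Implicit. Unset Printing Implicit Defensive.
Import Order.TTheory GRing.Theory Num.Theory.
Local Open Scope ring_scope.

(* Computational basis of n qubits: index a : 'I_(2^n), bit j of a is a_j,
   a = sum_j a_j 2^j (as in the paper's identification). *)
Definition bit (a j : nat) : bool := odd (a %/ 2 ^ j).

Lemma two_exp_gt0 (n : nat) : (0 < 2 ^ n)%N.
Proof. by rewrite expn_gt0. Qed.

Definition ket0 (n : nat) : 'I_(2 ^ n) := Ordinal (two_exp_gt0 n).

Definition dagger (m : nat) (A : 'M[algC]_m) : 'M[algC]_m := (map_mx Num.conj A)^T.

Definition unitary (m : nat) (A : 'M[algC]_m) : Prop := dagger A *m A = 1%:M.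

Definition Xop (n : nat) (i : 'I_n) : 'M[algC]_(2 ^ n) :=
  \matrix_(a, b) (if (bit a i != bit b i) &&
                     [forall j : 'I_n, (j != i) ==> (bit a j == bit b j)]
                  then 1 else 0).

Definition Zop (n : nat) (i : 'I_n) : 'M[algC]_(2 ^ n) :=
  \matrix_(a, b) (if a == b then (-1) ^+ bit b i else 0).

Definition mxpowF2 (m : nat) (A : 'M[algC]_m) (e : 'F_2) : 'M[algC]_m :=
  if e != 0 then A else 1%:M.

Definition mxprod (m n : nat) (F : 'I_n -> 'M[algC]_m) : 'M[algC]_m :=
  \big[mulmx/1%:M]_(j < n) F j.

Definition pauli (n : nat) (x z : 'rV['F_2]_n) : 'M[algC]_(2 ^ n) :=
  mxprod (fun j : 'I_n => mxpowF2 (Xop j) (x 0 j) *m mxpowF2 (Zop j) (z 0 j)).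

Definition clifford (n : nat) (W : 'M[algC]_(2 ^ n)) : Prop :=
  unitary W /\
  forall x z : 'rV['F_2]_n, exists (c : algC) (x' z' : 'rV['F_2]_n),
      dagger W *m pauli x z *m W = c *: pauli x' z'.

Definition z_tableau (n : nat) (W : 'M[algC]_(2 ^ n)) (C D : 'M['F_2]_n) : Prop :=
  forall i : 'I_n, exists c : algC, dagger W *m Zop i *m W = c *: pauli (row i C) (row i D).

Definition Gamma (P : {poly 'F_2}) (k j : nat) : 'F_2 := (('X ^+ k) %% P)`_j.

Definition M0 (n : nat) (P : {poly 'F_2}) : 'M['F_2]_n :=
  \matrix_(p < n, q < n) Gamma P (p + q) 0.

(* integer v in {0..2^n-1} identified with its bit vector / polynomial *)
Definition vpoly (n : nat) (v : 'rV['F_2]_n) : {poly 'F_2} := \sum_(j < n) (v 0 j)%:P * 'X^j.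

(* row vector of v (.) 2^i = v(x) x^i mod P *)
Definition gmul_row (n : nat) (P : {poly 'F_2}) (v : 'rV['F_2]_n) (i : nat) : 'rV['F_2]_n :=
  \row_(j < n) ((vpoly v * 'X ^+ i) %% P)`_j.

Definition alphaG (n : nat) (P : {poly 'F_2}) (v : 'rV['F_2]_n) (i j : 'I_n) : 'F_2 :=
  (gmul_row P v i *m M0 n P) 0 j.

Definition gen (n : nat) (P : {poly 'F_2}) (v : 'rV['F_2]_n) (i : 'I_n) : 'M[algC]_(2 ^ n) :=
  ('i ^+ (alphaG P v i i != 0)) *:
    (Xop i *m mxprod (fun j : 'I_n => mxpowF2 (Zop j) (alphaG P v i j))).

Definition MUB_family (n : nat) (P : {poly 'F_2}) (Uf : 'rV['F_2]_n -> 'M[algC]_(2 ^ n)) : Prop :=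
  forall v, clifford (Uf v) /\
    forall i : 'I_n, exists s : bool, dagger (Uf v) *m Zop i *m Uf v = ((-1) ^+ s) *: gen P v i.

Definition proj (n : nat) (b : 'I_(2 ^ n)) : 'M[algC]_(2 ^ n) := delta_mx b b.

Definition alphaU (n : nat) (V U : 'M[algC]_(2 ^ n)) (b : 'I_(2 ^ n)) : algC :=
  \tr ((dagger V *m proj (ket0 n) *m V) *m (dagger U *m proj b *m U)).

(* max_b alpha_{U,b} (all values are nonnegative reals) *)
Definition maxalpha (n : nat) (V U : 'M[algC]_(2 ^ n)) : algC :=
  \big[Num.max/0]_(b < 2 ^ n) alphaU V U b.

(* Main.v *)
Require Import Defs.
From HB Require Import structures.
From mathcomp Require Import all_boot all_order all_algebra all_field.
Import Order.TTheory GRing.Theory Num.Theory.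
Local Open Scope ring_scope.
Set Implicit Arguments. Unset Strict Implicit. Unset Printing Implicit Defensive.

Lemma F2cases (e : 'F_2) : e = 0 \/ e = 1.
Proof. case: e => [[|[|k]] Hk]; [left|right|by []]; exact: val_inj. Qed.

Lemma F2_11 : (1 : 'F_2) + 1 = 0. Proof. exact: val_inj. Qed.
Lemma F2_1n0 : (1 : 'F_2) != 0. Proof. by []. Qed.

Lemma F2_add_self (e : 'F_2) : e + e = 0.
Proof. by case: (F2cases e) => ->; rewrite ?addr0 ?F2_11. Qed.

Lemma F2_oppE (e : 'F_2) : - e = e.
Proof. by apply/eqP; rewrite eq_sym -subr_eq0 opprK F2_add_self. Qed.

Lemma mx_add_self m k (A : 'M['F_2]_(m, k)) : A + A = 0.
Proof. by apply/matrixP => i j; rewrite !mxE F2_add_self. Qed.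

Lemma mx_oppE m k (A : 'M['F_2]_(m, k)) : - A = A.
Proof. by apply/matrixP => i j; rewrite !mxE F2_oppE. Qed.

Definition b2F (b : bool) : 'F_2 := (b : nat)%:R.

Lemma b2F_inj : injective b2F.
Proof. by case; case. Qed.

Lemma b2F_xor b1 b2 : b2F (b1 (+) b2) = b2F b1 + b2F b2.
Proof. by case: b1; case: b2; rewrite /b2F /= ?add0r ?addr0 // F2_11. Qed.

Definition sgn (e : 'F_2) : algC := if e == 0 then 1 else -1.

Lemma sgn0 : sgn 0 = 1. Proof. by rewrite /sgn eqxx. Qed.
Lemma sgn1 : sgn 1 = -1. Proof. by []. Qed.

Lemma sgnD e f : sgn (e + f) = sgn e * sgn f.
Proof.
case: (F2cases e) => ->; case: (F2cases f) => ->;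
  rewrite ?addr0 ?add0r ?sgn0 ?sgn1 ?mulr1 ?mul1r ?F2_11 ?sgn0 //.
by rewrite mulrNN mulr1.
Qed.

Lemma sgn_sq e : sgn e * sgn e = 1.
Proof. by rewrite -sgnD F2_add_self sgn0. Qed.

Lemma sgn_b2F b : sgn (b2F b) = (-1) ^+ b.
Proof. by case: b. Qed.

Lemma sgn_neq0 e : sgn e != 0.
Proof. by case: (F2cases e) => ->; rewrite ?sgn0 ?sgn1 ?oppr_eq0 oner_neq0. Qed.

Lemma bits_inj n a b : (a < 2 ^ n)%N -> (b < 2 ^ n)%N ->
  (forall j, (j < n)%N -> bit a j = bit b j) -> a = b.
Proof.
elim: n a b => [|n IH] a b.
  by rewrite expn0 !ltnS !leqn0 => /eqP -> /eqP ->.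
move=> Ha Hb H.
have H0 := H 0%N (ltn0Sn n); rewrite /bit !expn0 !divn1 in H0.
have Hh : (a %/ 2 = b %/ 2)%N.
  apply: IH.
  - by rewrite ltn_divLR // -expnSr.
  - by rewrite ltn_divLR // -expnSr.
  move=> j Hj; have := H j.+1 Hj.
  by rewrite /bit expnS !divnMA.
by rewrite -[a]odd_double_half -[b]odd_double_half H0 -!divn2 Hh.
Qed.

Definition bv n (a : 'I_(2 ^ n)) : 'rV['F_2]_n := \row_(j < n) b2F (bit a j).

Lemma bv_inj n : injective (@bv n).
Proof.
move=> a b /rowP H; apply: val_inj; apply: (@bits_inj n); [exact: ltn_ord|exact: ltn_ord|move=> j Hj].
by have := H (Ordinal Hj); rewrite !mxE => /b2F_inj.
Qed.

Lemma bv_card n : (#|'I_(2 ^ n)| >= #|'rV['F_2]_n|)%N.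
Proof. by rewrite card_mx card_Fp // card_ord mul1n. Qed.

Definition bvi n (u : 'rV['F_2]_n) : 'I_(2 ^ n) :=
  iinv (inj_card_onto (@bv_inj n) (bv_card n) u).

Lemma bviK n : cancel (@bvi n) (@bv n).
Proof. move=> u; rewrite /bvi; exact: f_iinv. Qed.

Lemma bvK n : cancel (@bv n) (@bvi n).
Proof. move=> a; apply: (@bv_inj n); by rewrite bviK. Qed.

Lemma bv0 n : bv (ket0 n) = 0.
Proof. by apply/rowP => j; rewrite !mxE /bit div0n. Qed.

Definition dot n (y u : 'rV['F_2]_n) : 'F_2 := (y *m u^T) 0 0.

Lemma dotE n (y u : 'rV['F_2]_n) : dot y u = \sum_j y 0 j * u 0 j.
Proof. by rewrite /dot mxE; apply: eq_bigr => j _; rewrite mxE. Qed.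

Lemma dotDl n (y y' u : 'rV['F_2]_n) : dot (y + y') u = dot y u + dot y' u.
Proof. by rewrite /dot mulmxDl mxE. Qed.

Lemma dotDr n (y u u' : 'rV['F_2]_n) : dot y (u + u') = dot y u + dot y u'.
Proof. by rewrite /dot linearD /= mulmxDr mxE. Qed.

Lemma dot0l n (u : 'rV['F_2]_n) : dot 0 u = 0.
Proof. by rewrite /dot mul0mx mxE. Qed.

Lemma dot0r n (u : 'rV['F_2]_n) : dot u 0 = 0.
Proof. by rewrite /dot trmx0 mulmx0 mxE. Qed.

Lemma dotC n (y u : 'rV['F_2]_n) : dot y u = dot u y.
Proof. by rewrite !dotE; apply: eq_bigr => j _; rewrite mulrC. Qed.

Lemma dot_delta n (i : 'I_n) (u : 'rV['F_2]_n) : dot (delta_mx 0 i) u = u 0 i.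
Proof. by rewrite /dot -rowE mxE mxE. Qed.

Definition PM n (x z : 'rV['F_2]_n) : 'M[algC]_(2 ^ n) :=
  \matrix_(a, c) if bv a == bv c + x then sgn (dot z (bv c)) else 0.

Lemma PM_mul n (x z x' z' : 'rV['F_2]_n) :
  PM x z *m PM x' z' = sgn (dot z x') *: PM (x + x') (z + z').
Proof.
apply/matrixP => a c; rewrite !mxE.
rewrite (bigD1 (bvi (bv c + x'))) //= big1 ?addr0; last first.
  move=> b Hb; rewrite !mxE; case: (eqVneq (bv b) (bv c + x')) => [E|]; last by rewrite mulr0.
  by move: Hb; rewrite -E bvK eqxx.
rewrite !mxE !bviK eqxx addrA.
rewrite [bv c + x' + x]addrAC.
case: eqP => _; last by rewrite mul0r mulr0.
by rewrite dotDr dotDl !sgnD mulrAC mulrC.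
Qed.

Lemma PM00 n : PM 0 0 = 1%:M :> 'M_(2 ^ n).
Proof.
apply/matrixP => a c; rewrite !mxE addr0 dot0l sgn0 (inj_eq (@bv_inj n)).
by case: eqP.
Qed.

Lemma bv_eq_delta n (a c : 'I_(2 ^ n)) (i : 'I_n) :
  (bv a == bv c + delta_mx 0 i) =
  (bit a i != bit c i) && [forall j : 'I_n, (j != i) ==> (bit a j == bit c j)].
Proof.
have E : bv c + delta_mx 0 i = \row_j b2F (bit c j (+) (j == i)).
  by apply/rowP => j; rewrite !mxE b2F_xor eqxx.
rewrite E; apply/eqP/andP.
  move/rowP => H; split.
    by have := H i; rewrite !mxE eqxx => /b2F_inj ->; rewrite addbT; case: (bit c i).
  apply/forallP => j; apply/implyP => Hj.
  by have := H j; rewrite !mxE (negbTE Hj) addbF => /b2F_inj ->.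
move=> [H1 /forallP H2]; apply/rowP => j; rewrite !mxE; congr b2F.
case: (eqVneq j i) => [->|Hj]; first by rewrite addbT; case: (bit a i) (bit c i) H1 => [] [].
by rewrite addbF; have := H2 j; rewrite Hj /= => /eqP.
Qed.

Lemma Xop_PM n (i : 'I_n) : Xop i = PM (delta_mx 0 i) 0.
Proof.
apply/matrixP => a c; rewrite !mxE bv_eq_delta dot0l sgn0; by [].
Qed.

Lemma Zop_PM n (i : 'I_n) : Zop i = PM 0 (delta_mx 0 i).
Proof.
apply/matrixP => a c; rewrite !mxE addr0 (inj_eq (@bv_inj n)) dot_delta mxE sgn_b2F.
by [].
Qed.

Lemma dotZl n c (y u : 'rV['F_2]_n) : dot (c *: y) u = c * dot y u.
Proof. by rewrite /dot -scalemxAl mxE. Qed.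

Lemma mxpowF2_X n (i : 'I_n) e : mxpowF2 (Xop i) e = PM (e *: delta_mx 0 i) 0.
Proof.
rewrite /mxpowF2 Xop_PM; case: (F2cases e) => ->; last by rewrite scale1r.
by rewrite eqxx scale0r PM00.
Qed.

Lemma mxpowF2_Z n (i : 'I_n) e : mxpowF2 (Zop i) e = PM 0 (e *: delta_mx 0 i).
Proof.
rewrite /mxpowF2 Zop_PM; case: (F2cases e) => ->; last by rewrite scale1r.
by rewrite eqxx scale0r PM00.
Qed.

Lemma PM_prod_seq n (r : seq 'I_n) (x z : 'rV['F_2]_n) : uniq r ->
  \big[mulmx/1%:M]_(j <- r) PM (x 0 j *: delta_mx 0 j) (z 0 j *: delta_mx 0 j)
  = PM (\sum_(j <- r) x 0 j *: delta_mx 0 j) (\sum_(j <- r) z 0 j *: delta_mx 0 j).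
Proof.
elim: r => [|j r IH] /=; first by rewrite !big_nil PM00.
move=> /andP [Hj Hr]; rewrite !big_cons IH // PM_mul.
rewrite dotZl dot_delta summxE big1_seq ?mulr0 ?sgn0 ?scale1r //.
move=> k /andP [_ Hk]; rewrite !mxE /=.
case: (eqVneq j k) => [E|]; last by rewrite mulr0.
by move: Hj; rewrite E Hk.
Qed.

Lemma pauli_PM n (x z : 'rV['F_2]_n) : pauli x z = PM x z.
Proof.
rewrite /pauli /mxprod.
under eq_bigr => j _ do rewrite mxpowF2_X mxpowF2_Z PM_mul dot0l sgn0 scale1r addr0 add0r.
by rewrite PM_prod_seq ?index_enum_uniq // -!row_sum_delta.
Qed.

Section Dag.
Variable m : nat.
Implicit Types A B : 'M[algC]_m.

Lemma dagger_mul A B : dagger (A *m B) = dagger B *m dagger A.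
Proof. by rewrite /dagger map_mxM trmx_mul. Qed.

Lemma daggerK A : dagger (dagger A) = A.
Proof.
rewrite /dagger map_trmx trmxK; apply/matrixP => i j; by rewrite !mxE conjCK.
Qed.

Lemma dagger1 : dagger 1%:M = 1%:M :> 'M_m.
Proof. by rewrite /dagger map_mx1 trmx1. Qed.

Lemma unitary_r A : unitary A -> A *m dagger A = 1%:M.
Proof. exact: mulmx1C. Qed.

Lemma unitary_mul A B : unitary A -> unitary B -> unitary (A *m B).
Proof.
rewrite /unitary => HA HB; rewrite dagger_mul -mulmxA (mulmxA (dagger A)) HA mul1mx HB.
by [].
Qed.

Lemma unitary_dagger A : unitary A -> unitary (dagger A).
Proof. by move=> HA; rewrite /unitary daggerK unitary_r. Qed.

Lemma mul_delta_entry (X Y : 'M[algC]_m) i j a c :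
  (X *m delta_mx i j *m Y) a c = X a i * Y j c.
Proof.
have H k : (X *m delta_mx i j) a k = X a i * (k == j)%:R.
  rewrite mxE (bigD1 i) // big1 => [|l Hl]; rewrite !mxE ?eqxx ?(negbTE Hl) ?mulr0 //=.
  by rewrite addr0.
rewrite mxE (bigD1 j) // big1 => [|l Hl]; rewrite H ?eqxx ?(negbTE Hl) ?mulr0 ?mul0r //=.
by rewrite mulr1 addr0.
Qed.

Lemma tr_delta (M : 'M[algC]_m) i : \tr (delta_mx i i *m M) = M i i.
Proof.
rewrite mxtrace_mulC /mxtrace (bigD1 i) // big1 => [|k Hk].
  rewrite mxE (bigD1 i) // big1 => [|l Hl]; rewrite !mxE ?eqxx ?(negbTE Hl) ?mulr0 //=.
  by rewrite mulr1 !addr0.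
rewrite mxE big1 // => l _; rewrite !mxE (negbTE Hk) andbF mulr0 //.
Qed.

End Dag.

Lemma card_sub_mx (F : finFieldType) m k (A : 'M[F]_(m, k)) :
  #|[set u : 'rV_k | (u <= A)%MS]| = (#|F| ^ \rank A)%N.
Proof.
rewrite -[\rank A]mul1n -card_mx.
have injA: injective (mulmxr (row_base A)).
  have /row_freeP[A' A'K] := row_base_free A.
  by move=> ?; apply: can_inj (mulmxr A') _ => u; rewrite /= -mulmxA A'K mulmx1.
rewrite -(card_image (injA _)); apply: eq_card => v.
by rewrite inE -(eq_row_base A) (sameP submxP codomP).
Qed.

Lemma card_ker n (C : 'M['F_2]_n) :
  #|[set z : 'rV['F_2]_n | z *m C == 0]| = (2 ^ (n - \rank C))%N.
Proof.
have E : (2 = #|'F_2|)%N by rewrite card_Fp.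
rewrite -mxrank_ker [X in (X ^ _)%N]E -card_sub_mx.
by apply: eq_card => z; rewrite !inE sub_kermx.
Qed.

Lemma flip_sum n (K : pred 'rV['F_2]_n) (F : 'rV['F_2]_n -> algC) t :
  (forall z, K (z + t) = K z) -> (forall z, K z -> F (z + t) = - F z) ->
  \sum_(z | K z) F z = 0.
Proof.
move=> HK HF; set S := \sum_(z | K z) F z.
have E : S = - S.
  rewrite {1}/S (reindex_inj (addIr t)) /=.
  rewrite (eq_bigl K) => [|z]; last by rewrite HK.
  by rewrite /S -sumrN; apply: eq_bigr => z Hz; rewrite HF.
have : S *+ 2 == 0 by rewrite mulr2n {1}E addNr.
by rewrite mulrn_eq0 /= => /eqP.
Qed.

Lemma charsum n (y : 'rV['F_2]_n) :
  \sum_(z : 'rV['F_2]_n) sgn (dot z y) = if y == 0 then (2 ^ n)%:R else 0.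
Proof.
case: eqP => [->|/eqP Hy].
  under eq_bigr => z _ do rewrite dot0r sgn0.
  by rewrite sumr_const card_mx card_Fp // mul1n natrX.
have [j Hj] : exists j, y 0 j != 0.
  apply/existsP; move: Hy; apply: contraR; rewrite negb_exists => /forallP H.
  by apply/eqP/rowP => j; rewrite mxE; move: (H j); rewrite negbK => /eqP.
have Hj1 : y 0 j = 1 by case: (F2cases (y 0 j)) Hj => -> //; rewrite eqxx.
have := @flip_sum n predT (fun z => sgn (dot z y)) (delta_mx 0 j).
rewrite /=; apply => // z _.
by rewrite dotDl dot_delta Hj1 sgnD sgn1 mulrN1.
Qed.

Lemma PM0_mul n (z z' : 'rV['F_2]_n) : PM 0 z *m PM 0 z' = PM 0 (z + z').
Proof. by rewrite PM_mul dot0r sgn0 scale1r addr0. Qed.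

Lemma PM_oo n (x y : 'rV['F_2]_n) : PM x y (ket0 n) (ket0 n) = (x == 0)%:R.
Proof. by rewrite mxE bv0 add0r dot0r sgn0 eq_sym; case: eqP. Qed.

Lemma scale_entry m k (c : algC) (A : 'M[algC]_(m, k)) i j : (c *: A) i j = c * A i j.
Proof. by rewrite mxE. Qed.

Section Value.
Variables (n : nat) (W : 'M[algC]_(2 ^ n)) (C D : 'M['F_2]_n).
Hypothesis HW : unitary W.
Hypothesis HT : z_tableau W C D.
Local Notation o := (ket0 n).

Definition Az (z : 'rV['F_2]_n) := dagger W *m PM 0 z *m W.

Lemma Az_add z z' : Az (z + z') = Az z *m Az z'.
Proof.
rewrite /Az -PM0_mul !mulmxA; congr (_ *m _).
by rewrite -[dagger W *m PM 0 z *m W *m dagger W]mulmxA (unitary_r HW) mulmx1.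
Qed.

Lemma Az0 : Az 0 = 1%:M.
Proof. by rewrite /Az PM00 mulmx1 HW. Qed.

Lemma Az_tab z : exists l, Az z = l *: PM (z *m C) (z *m D).
Proof.
have step u u' : (exists l, Az u = l *: PM (u *m C) (u *m D)) ->
    (exists l, Az u' = l *: PM (u' *m C) (u' *m D)) ->
    exists l, Az (u + u') = l *: PM ((u + u') *m C) ((u + u') *m D).
  move=> [l1 H1] [l2 H2]; exists (l1 * l2 * sgn (dot (u *m D) (u' *m C))).
  by rewrite Az_add H1 H2 -scalemxAl -scalemxAr PM_mul !scalerA !mulmxDl.
have base (j : 'I_n) (c : 'F_2) :
    exists l, Az (c *: delta_mx 0 j) = l *: PM ((c *: delta_mx 0 j) *m C) ((c *: delta_mx 0 j) *m D).
  case: (F2cases c) => ->.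
    by exists 1; rewrite scale0r Az0 !mul0mx PM00 scale1r.
  have [l Hl] := HT j; exists l.
  by rewrite scale1r /Az -Zop_PM Hl pauli_PM !rowE.
rewrite (row_sum_delta z).
elim: (index_enum _) => [|j r IH].
  by rewrite big_nil; exists 1; rewrite Az0 !mul0mx PM00 scale1r.
by rewrite big_cons; apply: step.
Qed.

Definition hz z := Az z o o.

Lemma h_out z : z *m C != 0 -> hz z = 0.
Proof.
move=> Hz; have [l Hl] := Az_tab z.
by rewrite /hz Hl scale_entry PM_oo (negbTE Hz) mulr0.
Qed.

Lemma h_in z : z *m C = 0 -> Az z = hz z *: PM 0 (z *m D).
Proof.
move=> Hz; have [l Hl] := Az_tab z.
by rewrite /hz Hl scale_entry PM_oo Hz eqxx mulr1.
Qed.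

Lemma h_mul z z' : z *m C = 0 -> z' *m C = 0 -> hz (z + z') = hz z * hz z'.
Proof.
move=> Hz Hz'; rewrite /hz Az_add h_in // (h_in Hz') -scalemxAl -scalemxAr.
by rewrite PM0_mul scalerA !scale_entry !PM_oo eqxx !mulr1.
Qed.

Lemma h0 : hz 0 = 1.
Proof. by rewrite /hz Az0 mxE eqxx. Qed.

Lemma h_sq z : z *m C = 0 -> hz z * hz z = 1.
Proof. by move=> Hz; rewrite -h_mul // mx_add_self h0. Qed.

Definition vb (b : 'I_(2 ^ n)) := dagger W o b * W b o.

Lemma delta_expand (b : 'I_(2 ^ n)) :
  delta_mx b b = (2 ^ n)%:R^-1 *: \sum_(z : 'rV['F_2]_n) sgn (dot z (bv b)) *: PM 0 z :> 'M[algC]_(2 ^ n).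
Proof.
apply/matrixP => a c; rewrite !mxE summxE.
under eq_bigr => z _ do rewrite !mxE addr0.
case: (eqVneq (bv a) (bv c)) => [E|E].
  have -> : a = c by apply: (@bv_inj n).
  under eq_bigr => z _ do rewrite -sgnD -dotDr.
  rewrite charsum andbb.
  have -> : (bv b + bv c == 0) = (c == b).
    by rewrite -(inj_eq (@bv_inj n) c b) -[in RHS]subr_eq0 mx_oppE addrC.
  case: eqP => _; last by rewrite mulr0.
  by rewrite mulVf // pnatr_eq0 expn_eq0.
rewrite (eq_bigr (fun _ => 0)) => [|z _]; last by rewrite mulr0.
rewrite big1_eq mulr0.
have : a != c by apply: contra E => /eqP ->.
case: (eqVneq a b) => [->|] //= Hb.
by rewrite eq_sym (negbTE Hb).
Qed.

Lemma vb_sum b : vb b = (2 ^ n)%:R^-1 * \sum_z sgn (dot z (bv b)) * hz z.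
Proof.
rewrite /vb -mul_delta_entry delta_expand -scalemxAr -scalemxAl mxE; congr (_ * _).
rewrite mulmx_sumr mulmx_suml summxE; apply: eq_bigr => z _.
by rewrite -scalemxAr -scalemxAl mxE.
Qed.

Definition Kset := [set z : 'rV['F_2]_n | z *m C == 0].

Lemma vb_val b : vb b = 0 \/ vb b = #|Kset|%:R / (2 ^ n)%:R.
Proof.
rewrite vb_sum (bigID (fun z => z \in Kset)) /=.
rewrite [X in _ + X]big1 ?addr0; last first.
  by move=> z; rewrite inE => Hz; rewrite h_out // mulr0.
set chi := fun z => sgn (dot z (bv b)) * hz z.
have chi_mul z z' : z \in Kset -> z' \in Kset -> chi (z + z') = chi z * chi z'.
  rewrite !inE => /eqP Hz /eqP Hz'; rewrite /chi dotDl sgnD h_mul //.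
  by rewrite mulrACA.
case: (boolP [forall z in Kset, chi z == 1]) => [/forall_inP H|].
  right; rewrite mulrC; congr (_ * _).
  rewrite (eq_bigr (fun _ => 1)) => [|z Hz]; last exact/eqP/H.
  by rewrite sumr_const.
move/forall_inPn => [z0 Hz0 Hc].
have Hc' : chi z0 = -1.
  have : chi z0 ^+ 2 == 1 by rewrite expr2 -chi_mul // mx_add_self /chi dot0l sgn0 h0 mulr1.
  by rewrite sqrf_eq1 (negbTE Hc) /= => /eqP.
left; rewrite (@flip_sum n (fun z => z \in Kset) chi z0) ?mulr0 //.
  move=> z; rewrite !inE mulmxDl.
  by move: Hz0; rewrite inE => /eqP ->; rewrite addr0.
by move=> z Hz; rewrite chi_mul // Hc' mulrN1.
Qed.

Lemma vb_total : \sum_b vb b = 1.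
Proof.
have := congr1 (fun M : 'M[algC]_(2 ^ n) => M o o) HW.
rewrite /= [LHS]mxE [RHS]mxE eqxx => H.
transitivity (true%:R : algC); last by [].
by rewrite -H; apply: eq_bigr.
Qed.

Definition cval : algC := #|Kset|%:R / (2 ^ n)%:R.

Lemma cvalE : cval = 2%:R ^- \rank C.
Proof.
rewrite /cval /Kset card_ker.
have E : (2 ^ n = 2 ^ (n - \rank C) * 2 ^ \rank C)%N.
  by rewrite -expnD subnK // rank_leq_col.
rewrite E natrM invfM mulrA mulfV ?mul1r ?natrX //.
by rewrite expf_neq0 // pnatr_eq0.
Qed.

Lemma cval_gt0 : 0 < cval.
Proof. by rewrite cvalE invr_gt0 exprn_gt0 // ltr0n. Qed.

Lemma cval_neq0 : cval != 0.
Proof. by rewrite gt_eqF // cval_gt0. Qed.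

Definition Bset := [set b : 'I_(2 ^ n) | vb b == cval].

Lemma card_Bset : #|Bset| = (2 ^ \rank C)%N.
Proof.
have H : \sum_b vb b = cval *+ #|Bset|.
  rewrite (bigID (fun b => b \in Bset)) /= [X in _ + X]big1 ?addr0.
    by rewrite -sumr_const; apply: eq_bigr => b; rewrite inE => /eqP.
  move=> b; rewrite inE; case: (vb_val b) => -> //; by rewrite eqxx.
move: H; rewrite vb_total cvalE => /(congr1 (fun x => x * 2%:R ^+ \rank C)).
rewrite mul1r -(mulr_natl (2%:R ^- \rank C)) -mulrA mulVf ?mulr1; last by rewrite expf_neq0 // pnatr_eq0.
by rewrite -natrX => /eqP; rewrite eqr_nat => /eqP.
Qed.

Lemma card_zero : #|[set b : 'I_(2 ^ n) | vb b == 0]| = (2 ^ n - 2 ^ \rank C)%N.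
Proof.
have -> : [set b : 'I_(2 ^ n) | vb b == 0] = ~: Bset.
  apply/setP => b; rewrite !inE.
  case: (vb_val b) => ->; rewrite ?eqxx ?(negbTE cval_neq0) //.
  by rewrite eq_sym (negbTE cval_neq0).
have := cardsC Bset; rewrite card_ord card_Bset => H.
by rewrite -[X in (X - _)%N]H addKn.
Qed.

Lemma max_vb : \big[Num.max/0]_b vb b = cval.
Proof.
have : (0 < #|Bset|)%N by rewrite card_Bset expn_gt0.
move/card_gt0P => [b0]; rewrite inE => Hb0.
have mx x y : (x = 0 \/ x = cval) -> (y = 0 \/ y = cval) ->
    Num.max x y = if (x == cval) || (y == cval) then cval else 0.
  have c0 : (0 == cval) = false by rewrite eq_sym (negbTE cval_neq0).
  move=> [->|->] [->|->]; rewrite ?eqxx ?c0 /=.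
  - by rewrite /Num.max /Order.max ltxx.
  - by rewrite /Num.max /Order.max cval_gt0.
  - by rewrite /Num.max /Order.max lt_gtF // cval_gt0.
  - by rewrite /Num.max /Order.max ltxx.
have gen (r : seq 'I_(2 ^ n)) : \big[Num.max/0]_(b <- r) vb b =
    if has (fun b => vb b == cval) r then cval else 0.
  elim: r => [|j r IH]; first by rewrite big_nil.
  have c0 : (0 == cval) = false by rewrite eq_sym (negbTE cval_neq0).
  rewrite big_cons IH /= mx.
  - by case: (vb j == cval); case: has; rewrite ?eqxx ?c0.
  - exact: vb_val.
  - by case: has; [right|left].
rewrite gen; case: hasP => // [[]]; exists b0 => //; exact: mem_index_enum.
Qed.

End Value.

Lemma alphaU_vb n (V U : 'M[algC]_(2 ^ n)) b :
  alphaU V U b = vb (U *m dagger V) b.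
Proof.
rewrite /alphaU /vb /proj.
have -> : (dagger V *m delta_mx (ket0 n) (ket0 n) *m V) *m (dagger U *m delta_mx b b *m U)
   = dagger V *m (delta_mx (ket0 n) (ket0 n) *m (V *m dagger U *m delta_mx b b *m U)).
  by rewrite !mulmxA.
rewrite mxtrace_mulC -(mulmxA (delta_mx _ _)) tr_delta dagger_mul daggerK -mul_delta_entry.
by rewrite !mulmxA.
Qed.

Lemma PM_neq0 n (x z : 'rV['F_2]_n) : PM x z != 0.
Proof.
apply/negP => /eqP /matrixP /(_ (bvi x) (ket0 n)).
rewrite !mxE bviK bv0 add0r eqxx dot0r sgn0 => /eqP.
by rewrite oner_eq0.
Qed.

Lemma sgn_inj : injective sgn.
Proof.
have H : (1 : algC) != -1.
  by rewrite -subr_eq0 opprK (_ : 1 + 1 = 2%:R) // pnatr_eq0.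
move=> e f; case: (F2cases e) => ->; case: (F2cases f) => -> //;
  rewrite ?sgn0 ?sgn1 => /eqP; [by rewrite (negbTE H)|by rewrite eq_sym (negbTE H)].
Qed.

Lemma label_unique n (c c' : algC) (x z x' z' : 'rV['F_2]_n) :
  c != 0 -> c *: PM x z = c' *: PM x' z' -> x = x' /\ z = z'.
Proof.
move=> Hc E.
have Ex : x = x'.
  move/matrixP: E => /(_ (bvi x) (ket0 n)); rewrite !mxE bviK bv0 !add0r eqxx.
  rewrite !dot0r sgn0 mulr1; case: eqP => // _; rewrite mulr0 => Hc0.
  by move: Hc; rewrite Hc0 eqxx.
subst x'; split => //.
have Ec : c = c'.
  move/matrixP: E => /(_ (bvi x) (ket0 n)); rewrite !mxE bviK bv0 !add0r eqxx.
  by rewrite !dot0r sgn0 !mulr1.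
subst c'.
apply/rowP => j.
move/matrixP: E => /(_ (bvi (delta_mx 0 j + x)) (bvi (delta_mx 0 j))).
rewrite !mxE !bviK eqxx => /(mulfI Hc) /sgn_inj.
by rewrite !(dotC _ (delta_mx 0 j)) !dot_delta.
Qed.

Section Cliff.
Variables (n : nat) (V : 'M[algC]_(2 ^ n)).
Hypothesis HV : clifford V.

Let HVu : unitary V := HV.1.

Definition prT := ('rV['F_2]_n * 'rV['F_2]_n)%type.

Lemma tau_ex : exists tau : prT -> prT, forall p : prT,
    exists c, dagger V *m PM p.1 p.2 *m V = c *: PM (tau p).1 (tau p).2.
Proof.
have H : forall p : prT, exists q : prT,
    exists c, dagger V *m PM p.1 p.2 *m V = c *: PM q.1 q.2.
  move=> p; have [c [x' [z' H]]] := HV.2 p.1 p.2.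
  by exists (x', z'), c; rewrite -!pauli_PM.
exact: fin_all_exists H.
Qed.

Lemma conj_nonzero (M : 'M[algC]_(2 ^ n)) c (A : 'M[algC]_(2 ^ n)) :
  dagger V *m M *m V = c *: A -> M != 0 -> c != 0.
Proof.
move=> E HM; apply/negP => /eqP Hc; move: E; rewrite Hc scale0r => E.
have : V *m (dagger V *m M *m V) *m dagger V = M.
  by rewrite !mulmxA (unitary_r HVu) mul1mx -mulmxA (unitary_r HVu) mulmx1.
by rewrite E mulmx0 mul0mx => /esym /eqP; rewrite (negbTE HM).
Qed.

Variable tau : prT -> prT.
Hypothesis Htau : forall p : prT,
    exists c, dagger V *m PM p.1 p.2 *m V = c *: PM (tau p).1 (tau p).2.

Lemma conjV_inv (M : 'M[algC]_(2 ^ n)) c A :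
  dagger V *m M *m V = c *: A -> c != 0 -> V *m A *m dagger V = c^-1 *: M.
Proof.
move=> E Hc.
have : V *m (dagger V *m M *m V) *m dagger V = M.
  by rewrite !mulmxA (unitary_r HVu) mul1mx -mulmxA (unitary_r HVu) mulmx1.
rewrite E -scalemxAr -scalemxAl => <-.
by rewrite scalerA mulVf // scale1r.
Qed.

Lemma tau_inj : injective tau.
Proof.
move=> p p' E.
have [c Hc] := Htau p; have [c' Hc'] := Htau p'.
have c0 := conj_nonzero Hc (PM_neq0 _ _).
have c0' := conj_nonzero Hc' (PM_neq0 _ _).
have H1 := conjV_inv Hc c0; have H2 := conjV_inv Hc' c0'.
rewrite E in H1; rewrite H1 in H2.
have [] := label_unique (invr_neq0 c0) H2.
by case: p {Hc c0 H1 H2 E} => ? ?; case: p' {Hc' c0'} => ? ? /= -> ->.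
Qed.

Definition taui (q : prT) : prT := iinv (inj_card_onto tau_inj (leqnn _) q).

Lemma tauiK : cancel taui tau.
Proof. move=> q; exact: f_iinv. Qed.

Lemma tauK : cancel tau taui.
Proof. by move=> p; apply: tau_inj; rewrite tauiK. Qed.

Lemma tau00 : tau (0, 0) = (0, 0).
Proof.
have [c Hc] := Htau (0, 0).
move: Hc; rewrite /= PM00 mulmx1 HVu -(scale1r (1%:M : 'M[algC]_(2 ^ n))) -{1}PM00.
move=> /esym E; have [] := label_unique (oner_neq0 _) (esym E) .
by case: (tau (0,0)) => ? ? /= <- <-.
Qed.

Lemma conjV_PM (x z : 'rV['F_2]_n) :
  exists2 c, c != 0 & V *m PM x z *m dagger V = c *: PM (taui (x, z)).1 (taui (x, z)).2.
Proof.
have [c Hc] := Htau (taui (x, z)); rewrite tauiK /= in Hc.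
have c0 := conj_nonzero Hc (PM_neq0 _ _).
exists c^-1; first by rewrite invr_neq0.
by rewrite (conjV_inv Hc c0).
Qed.

End Cliff.

Section Field.
Variables (n : nat) (P : {poly 'F_2}).
Hypothesis HP : irreducible_poly P.
Hypothesis HsP : size P = n.+1.

Definition Lf (f : {poly 'F_2}) : 'F_2 := (f %% P)`_0.

Lemma Lf_add : {morph Lf : f g / f + g}.
Proof. by move=> f g; rewrite /Lf modpD coefD. Qed.

Lemma Lf0 : Lf 0 = 0.
Proof. by rewrite /Lf mod0p coef0. Qed.

Lemma Lf_scale c f : Lf (c *: f) = c * Lf f.
Proof. by rewrite /Lf modpZl coefZ. Qed.

Lemma Lf_sum I (r : seq I) (F : I -> {poly 'F_2}) :
  Lf (\sum_(i <- r) F i) = \sum_(i <- r) Lf (F i).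
Proof. exact: (big_morph Lf Lf_add Lf0). Qed.


Lemma small_sum (r : {poly 'F_2}) : (size r <= n)%N ->
  r = \sum_(p < n) r`_p *: 'X^p.
Proof.
move=> Hr; rewrite -poly_def; apply/polyP => k; rewrite coef_poly.
case: ltnP => // Hk.
by move/leq_sizeP: Hr => ->.
Qed.

Lemma P_neq0 : P != 0.
Proof. exact: irredp_neq0. Qed.

Lemma size_mod (f : {poly 'F_2}) : (size (f %% P)%R <= n)%N.
Proof. by rewrite -ltnS -HsP ltn_modp P_neq0. Qed.

Definition Mv (v : 'rV['F_2]_n) : 'M['F_2]_n := \matrix_(i, j) alphaG P v i j.

Lemma alphaG_E v (i j : 'I_n) : alphaG P v i j = Lf (vpoly v * 'X^i * 'X^j).
Proof.
rewrite /alphaG mxE.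
under eq_bigr => p _ do rewrite !mxE /Gamma.
have gen (r : {poly 'F_2}) : (size r <= n)%N ->
    \sum_(p < n) r`_p * ('X^(p + j) %% P)`_0 = Lf (r * 'X^j).
  move=> Hr; rewrite [in RHS](small_sum Hr) mulr_suml Lf_sum; apply: eq_bigr => p _.
  by rewrite -scalerAl Lf_scale -exprD.
rewrite gen ?size_mod //.
by rewrite /Lf mulrC modp_mul mulrC.
Qed.

Lemma xMv_E (x v : 'rV['F_2]_n) (j : 'I_n) :
  (x *m Mv v) 0 j = Lf (vpoly v * vpoly x * 'X^j).
Proof.
rewrite mxE /vpoly mulr_sumr mulr_suml Lf_sum; apply: eq_bigr => i _.
by rewrite mxE alphaG_E mul_polyC -scalerAr -scalerAl Lf_scale.
Qed.

Lemma coef_vpoly (u : 'rV['F_2]_n) k : (vpoly u)`_k = \sum_(i < n) u 0 i * (k == i)%:R.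
Proof. by rewrite /vpoly coef_sum; apply: eq_bigr => i _; rewrite coefCM coefXn. Qed.

Lemma size_vpoly (u : 'rV['F_2]_n) : (size (vpoly u) <= n)%N.
Proof.
apply/leq_sizeP => k Hk; rewrite coef_vpoly big1 // => i _.
have : (k != i) by apply/eqP => E; move: (ltn_ord i); rewrite -E ltnNge Hk.
by move/negbTE => ->; rewrite mulr0.
Qed.

Lemma vpoly_neq0 (u : 'rV['F_2]_n) : u != 0 -> vpoly u != 0.
Proof.
move=> Hu; have [j Hj] : exists j, u 0 j != 0.
  apply/existsP; move: Hu; apply: contraR; rewrite negb_exists => /forallP H.
  by apply/eqP/rowP => j; rewrite mxE; move: (H j); rewrite negbK => /eqP.
apply/negP => /eqP E; move: Hj; apply/negP; rewrite negbK.
have := coef_vpoly u j; rewrite E coef0 (bigD1 j) //= big1 ?addr0.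
  by rewrite eqxx mulr1 => <-.
move=> i Hi; rewrite (_ : (j == i :> nat) = false) ?mulr0 //.
by apply/negbTE; rewrite eq_sym.
Qed.

Lemma vpolyB (v w : 'rV['F_2]_n) : vpoly (v - w) = vpoly v - vpoly w.
Proof.
by rewrite /vpoly -sumrB; apply: eq_bigr => i _; rewrite !mxE polyCB mulrBl.
Qed.

Lemma coprime_small (q : {poly 'F_2}) : q != 0 -> (size q <= n)%N -> coprimep P q.
Proof.
move=> Hq Hs; apply/coprimepP => d HdP Hdq.
case: (eqVneq (size d) 1%N) => [/eqP|Hd]; first by rewrite size_poly_eq1.
have := HP.2 d Hd HdP => /eqp_dvdl E.
rewrite E in Hdq; have := dvdp_leq Hq Hdq.
by rewrite HsP ltnNge Hs.
Qed.

Lemma Mv_inj (x : 'rV['F_2]_n) : x != 0 -> injective (fun v => x *m Mv v).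
Proof.
move=> Hx v w /= /rowP E.
apply/eqP; rewrite -subr_eq0; apply: contraT => Hvw.
set g := vpoly (v - w) * vpoly x.
have H0 (j : 'I_n) : Lf (g * 'X^j) = 0.
  have := E j; rewrite !xMv_E => /eqP; rewrite -subr_eq0 -mulN1r -(Lf_scale (-1)).
  rewrite scaleN1r -Lf_add -mulrBl -mulrBl -vpolyB => /eqP.
  by rewrite /g.
have Hcop : coprimep P g.
  by rewrite coprimepMr !coprime_small ?vpoly_neq0 ?size_vpoly.
have [[a b] /= Hab] := Bezout_eq1_coprimepP _ _ Hcop.
have H1 : Lf (g * (b %% P)) = 1.
  rewrite /Lf modp_mul mulrC.
  have := congr1 (fun f => f %% P) Hab; rewrite /= modpD modp_mull add0r => ->.
  rewrite modp_small ?coef1 // size_poly1; exact: HP.1.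
move: H1; rewrite (small_sum (size_mod b)) mulr_sumr Lf_sum big1 => [/eqP|j _].
  by rewrite eq_sym oner_eq0.
by rewrite -scalerAr Lf_scale H0 mulr0.
Qed.

End Field.

Lemma card_inj_pre (A B : finType) (g : A -> B) (T : {set B}) : injective g ->
  #|[set z | g z \in T]| = (\sum_(t in T) [exists z, g z == t])%N.
Proof.
move=> Hg; rewrite -(card_imset _ Hg).
have -> : g @: [set z | g z \in T] = [set t in T | [exists z, g z == t]].
  apply/setP => t; rewrite !inE; apply/imsetP/andP.
    by move=> [z]; rewrite inE => Hz ->; split => //; apply/existsP; exists z.
  by move=> [Ht /existsP [z /eqP Hz]]; exists z; rewrite ?inE Hz.
rewrite -sum1_card big_mkcond [RHS]big_mkcond /=; apply: eq_bigr => t _.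
by rewrite !inE; case: (t \in T); case: [exists z, _].
Qed.

Lemma comb n (T : {set prT n}) (M : 'rV['F_2]_n -> 'M['F_2]_n) :
  #|T| = (2 ^ n)%N -> (0, 0) \in T ->
  (forall x : 'rV['F_2]_n, x != 0 -> injective (fun v => x *m M v)) ->
  (#|[set z : 'rV['F_2]_n | ((0%R : 'rV['F_2]_n), z) \in T]| +
   \sum_(v : 'rV['F_2]_n) #|[set z : 'rV['F_2]_n | (z, z *m M v) \in T]|)%N = (2 ^ n.+1)%N.
Proof.
move=> HT H0 HM.
have E v : #|[set z : 'rV['F_2]_n | (z, z *m M v) \in T]| =
    (\sum_(t in T) [exists z, (z, z *m M v) == t])%N.
  by apply: card_inj_pre => z z' [].
rewrite (eq_bigr _ (fun v _ => E v)).
rewrite (@card_inj_pre _ _ (fun z => ((0%R : 'rV['F_2]_n), z))); last by move=> z z' [].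
rewrite exchange_big /= -big_split /=.
rewrite (bigD1 (0, 0)) //=.
have E0 : [exists z : 'rV['F_2]_n, ((0%R : 'rV['F_2]_n), z) == (0, 0)] by apply/existsP; exists 0.
have E1 v : [exists z, (z, z *m M v) == (0, 0)] by apply/existsP; exists 0; rewrite mul0mx.
rewrite E0 (eq_bigr (fun _ => 1%N)) => [|v _]; last by rewrite E1.
rewrite sum1_card card_mx card_Fp // mul1n.
rewrite (eq_bigr (fun _ => 1%N)) => [|[x y] /andP [Ht Hne]].
  rewrite sum1_card.
  have := cardD1 (0, 0) T; rewrite HT H0 add1n.
  set K := #|[predD1 T & (0, 0)]|.
  rewrite (_ : #|_| = K); last by apply: eq_card => i; rewrite !inE andbC.
  by move=> H2; rewrite expnS mul2n -addnn H2 /= add1n addSn addnS.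
case: (eqVneq x 0) => [Ex|Hx].
  subst x; have Hy : y != 0 by apply: contra Hne => /eqP ->.
  have -> : [exists z, ((0%R : 'rV['F_2]_n), z) == (0, y)] by apply/existsP; exists y.
  rewrite big1 // => v _; case: existsP => // -[z /eqP [Ez Ey]].
  by move: Hy; rewrite -Ey Ez mul0mx eqxx.
have -> : [exists z, ((0%R : 'rV['F_2]_n), z) == (x, y)] = false.
  by apply: negbTE; apply/existsP => [[z /eqP [Ez _]]]; move: Hx; rewrite Ez eqxx.
rewrite add0n.
have -> : (\sum_v [exists z, (z, z *m M v) == (x, y)] = \sum_v (x *m M v == y))%N.
  apply: eq_bigr => v _; congr (nat_of_bool _); apply/existsP/eqP => [[z /eqP [-> ->]]|<-] //.
  by exists x.
rewrite -big_mkcond /= sum1_card.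
transitivity #|(fun v => x *m M v) @^-1: [set y]|.
  by apply: eq_card => v; rewrite !inE.
by rewrite (card_preimset [set y] (HM x Hx)) cards1.
Qed.

Lemma key_tab n (V U : 'M[algC]_(2 ^ n)) (HV : clifford V) (tau : prT n -> prT n)
  (Htau : forall p : prT n,
    exists c, dagger V *m PM p.1 p.2 *m V = c *: PM (tau p).1 (tau p).2)
  (C0 D0 : 'M['F_2]_n) :
  unitary U -> z_tableau U C0 D0 ->
  exists C D, z_tableau (U *m dagger V) C D /\
    Kset C = [set z | (taui HV Htau (z *m C0, z *m D0)).1 == 0].
Proof.
move=> HU HT0.
set W := U *m dagger V.
have HW : unitary W := unitary_mul HU (unitary_dagger HV.1).
have conjW z : exists2 mu, mu != 0 &
    dagger W *m PM 0 z *m W = mu *: PM (taui HV Htau (z *m C0, z *m D0)).1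
                                       (taui HV Htau (z *m C0, z *m D0)).2.
  have [l Hl] := Az_tab HU HT0 z.
  have l0 : l != 0.
    apply/eqP => l0; have := Az_add HU z z; rewrite mx_add_self (Az0 HU) Hl l0.
    rewrite scale0r mul0mx => /matrixP /(_ (ket0 n) (ket0 n)); rewrite !mxE eqxx.
    by move/eqP; rewrite oner_eq0.
  have [c c0 Hc] := conjV_PM HV Htau (z *m C0) (z *m D0).
  exists (l * c); first by rewrite mulf_neq0.
  have -> : dagger W *m PM 0 z *m W = V *m Az U z *m dagger V.
    by rewrite /W /Az dagger_mul daggerK !mulmxA.
  by rewrite Hl -scalemxAr -scalemxAl Hc scalerA.
pose C := \matrix_(i < n) (taui HV Htau (delta_mx 0 i *m C0, delta_mx 0 i *m D0)).1.
pose D := \matrix_(i < n) (taui HV Htau (delta_mx 0 i *m C0, delta_mx 0 i *m D0)).2.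
have HT : z_tableau W C D.
  move=> i; have [mu _ H] := conjW (delta_mx 0 i); exists mu.
  by rewrite Zop_PM pauli_PM !rowK H.
exists C, D; split => //.
apply/setP => z; rewrite !inE.
have [l' Hl'] := Az_tab HW HT z; have [mu mu0 H] := conjW z.
rewrite /Az H in Hl'.
by have [-> _] := label_unique mu0 Hl'.
Qed.

Lemma tab_one n : z_tableau (1%:M : 'M[algC]_(2 ^ n)) 0 1%:M.
Proof.
move=> i; exists 1.
by rewrite dagger1 mul1mx mulmx1 scale1r pauli_PM Zop_PM row0 row1.
Qed.

Lemma tab_Uf n (P : {poly 'F_2}) (Uf : 'rV['F_2]_n -> 'M[algC]_(2 ^ n)) v :
  MUB_family P Uf -> z_tableau (Uf v) 1%:M (Mv P v).
Proof.
move=> HU i; have [s Hs] := (HU v).2 i.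
exists ((-1) ^+ s * 'i ^+ (alphaG P v i i != 0)).
rewrite Hs /gen scalerA pauli_PM row1; congr (_ *: _).
have -> : mxprod (fun j : 'I_n => mxpowF2 (Zop j) (alphaG P v i j)) =
          pauli 0 (row i (Mv P v)).
  rewrite /pauli /mxprod; apply: eq_bigr => j _.
  by rewrite !mxE /mxpowF2 eqxx mul1mx.
by rewrite Xop_PM pauli_PM PM_mul dot0l sgn0 scale1r addr0 add0r.
Qed.

Unset Implicit Arguments.

Theorem lemma2 (n : nat) (P : {poly 'F_2}) (Uf : 'rV['F_2]_n -> 'M[algC]_(2 ^ n))
    (V : 'M[algC]_(2 ^ n)) :
  irreducible_poly P -> size P = n.+1 ->
  MUB_family P Uf -> clifford V ->
  maxalpha V 1%:M + \sum_(v : 'rV['F_2]_n) maxalpha V (Uf v) = 2 /\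
  (forall U : 'M[algC]_(2 ^ n), (U = 1%:M \/ exists v, U = Uf v) ->
   forall C D : 'M['F_2]_n, z_tableau (U *m dagger V) C D ->
     #|[set b : 'I_(2 ^ n) | alphaU V U b == (2%:R ^- (\rank C))]| = (2 ^ \rank C)%N /\
     #|[set b : 'I_(2 ^ n) | alphaU V U b == 0]| = (2 ^ n - 2 ^ \rank C)%N).
Proof.
move=> HP HsP HU HV.
have unit1 : unitary (1%:M : 'M[algC]_(2 ^ n)) by rewrite /unitary dagger1 mul1mx.
split; last first.
  move=> U HUe C D HT.
  have HUu : unitary U by case: HUe => [->|[v ->]] //; exact: (HU v).1.1.
  have HW := unitary_mul HUu (unitary_dagger HV.1).
  split.
    rewrite -(card_Bset HW HT); apply: eq_card => b.
    by rewrite !inE alphaU_vb cvalE.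
  rewrite -(card_zero HW HT); apply: eq_card => b.
  by rewrite !inE alphaU_vb.
have [tau Htau] := tau_ex HV.
set T := [set t : prT n | (taui HV Htau t).1 == 0].
have maxU U C0 D0 : unitary U -> z_tableau U C0 D0 ->
    maxalpha V U = #|[set z | (z *m C0, z *m D0) \in T]|%:R / (2 ^ n)%:R.
  move=> HUu HT0; have [C [D [HT HK]]] := key_tab HV Htau HUu HT0.
  have HW := unitary_mul HUu (unitary_dagger HV.1).
  rewrite /maxalpha (eq_bigr _ (fun b _ => alphaU_vb V U b)) (max_vb HW HT) /cval HK.
  by congr (_%:R / _); apply: eq_card => z; rewrite !inE.
rewrite (maxU _ _ _ unit1 (@tab_one n)).
rewrite (eq_bigr _ (fun v _ => maxU _ _ _ (HU v).1.1 (tab_Uf v HU))).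
rewrite -mulr_suml -mulrDl -natr_sum -natrD.
have HTc : #|T| = (2 ^ n)%N.
  have tinj : injective (taui HV Htau) := can_inj (tauiK HV Htau).
  have -> : T = taui HV Htau @^-1: [set q : prT n | q.1 == 0].
    by apply/setP => t; rewrite !inE.
  rewrite card_preimset //.
  have -> : [set q : prT n | q.1 == 0] = (fun a => (0, a)) @: [set: 'rV['F_2]_n].
    apply/setP => -[x y]; rewrite !inE /=; apply/eqP/imsetP.
      by move=> ->; exists y; rewrite ?inE.
    by move=> [a _ [-> _]].
  by rewrite card_imset ?cardsT ?card_mx ?card_Fp ?mul1n // => a b [].
have HT0 : (0, 0) \in T.
  by rewrite inE -{1}(tau00 HV Htau) tauK.
have := comb HTc HT0 (Mv_inj HP HsP).
have E1 : #|[set z | (z *m 0, z *m 1%:M) \in T]| = #|[set z | ((0 : 'rV['F_2]_n), z) \in T]|.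
  by apply: eq_card => z; rewrite !inE mulmx0 mulmx1.
have E2 v : #|[set z | (z *m 1%:M, z *m Mv P v) \in T]| = #|[set z | (z, z *m Mv P v) \in T]|.
  by apply: eq_card => z; rewrite !inE mulmx1.
rewrite E1 (eq_bigr _ (fun v _ => E2 v)) => ->.
rewrite expnS natrM mulfK //; by rewrite pnatr_eq0 expn_eq0.
Qed.
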